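(* For all $i,j,k\in\{1,\dots,\ell\}$, $$[F_i,M_{jk}]=\delta_{ij}M_{j+1,k}K_i^{-2}-\delta_{ik}K_i^2M_{j,k-1}-\delta_{ij}\delta_{ik}\tfrac{K_i^2-K_i^{-2}}{q-q^{-1}},$$ $$[E_i,M_{jk}^*]=\delta_{ik}M_{j,k-1}^*K_i^2-\delta_{ij}K_i^{-2}M_{j+1,k}^*+\delta_{ij}\delta_{ik}\tfrac{K_i^2-K_i^{-2}}{q-q^{-1}},$$ where $M_{jk}:=0$ whenever $j>k$.
   Context: Fix $0<q<1$, $\ell\ge1$. In $U_q(\mathfrak{su}(\ell+1))$ (generators $K_i^{\pm1},E_i,F_i=E_i^*$, $K_i=K_i^*$, $1\le i\le\ell$, with $[K_i,K_j]=0$, $K_iE_iK_i^{-1}=qE_i$, $K_iE_jK_i^{-1}=q^{-1/2}E_j$ if $|i-j|=1$, $=E_j$ if $|i-j|>1$, $[E_i,F_j]=\delta_{ij}\frac{K_i^2-K_i^{-2}}{q-q^{-1}}$, $E_i^2E_j-(q+q^{-1})E_iE_jE_i+E_jE_i^2=0$ for $|i-j|=1$, $[E_i,E_j]=0$ for $|i-j|>1$, plus adjoints) set $[a,b]_q:=ab-q^{-1}ba$, $M_{ii}:=E_i$ and $M_{jk}:=[E_j,M_{j+1,k}]_q$ for $j<k$. *)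

(* Defs.v *)
From HB Require Import structures.
From mathcomp Require Import all_boot all_order all_algebra.
Set Implicit Arguments. Unset Strict Implicit. Unset Printing Implicit Defensive.
Import Order.TTheory GRing.Theory Num.Theory.
Local Open Scope ring_scope.

Definition qbr (R : fieldType) (A : lalgType R) (q : R) (a b : A) : A :=
  a * b - q^-1 *: (b * a).

Definition comm (A : pzRingType) (a b : A) : A := a * b - b * a.

(* Maux q E n k = M_{k-n,k}, where M_{kk} = E_k, M_{jk} = [E_j, M_{j+1,k}]_q *)
Fixpoint Maux (R : fieldType) (A : lalgType R) (q : R) (E : nat -> A)
    (n k : nat) : A :=
  match n with
  | 0 => E k
  | n'.+1 => qbr q (E (k - n'.+1)%N) (Maux q E n' k)
  end.

Definition Mq (R : fieldType) (A : lalgType R) (q : R) (E : nat -> A)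
    (j k : nat) : A :=
  if (j <= k)%N then Maux q E (k - j) k else 0.

(* Main.v *)
Require Import Defs.
From HB Require Import structures.
From mathcomp Require Import all_boot all_order all_algebra.
From mathcomp Require Import zify ring lra.
Import Order.TTheory GRing.Theory Num.Theory.
Local Open Scope ring_scope.
Set Implicit Arguments. Unset Strict Implicit.
Local Open Scope ring_scope.

Lemma comm_mul (A : pzRingType) (x a b : A) :
  comm x (a * b) = comm x a * b + a * comm x b.
Proof. by rewrite /comm mulrBl mulrBr !mulrA addrA subrK. Qed.

Lemma comm_B (A : pzRingType) (x a b : A) :
  comm x (a - b) = comm x a - comm x b.
Proof. by rewrite /comm mulrBl mulrBr [in LHS]opprD addrACA -opprD. Qed.

Lemma comm_Z (R : fieldType) (A : algType R) (c : R) (x a : A) :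
  comm x (c *: a) = c *: comm x a.
Proof. by rewrite /comm scalerBr -scalerAl -scalerAr. Qed.

Lemma comm_qbr (R : fieldType) (A : algType R) (q : R) (x a b : A) :
  comm x (qbr q a b) = qbr q (comm x a) b + qbr q a (comm x b).
Proof.
rewrite /qbr comm_B comm_Z !comm_mul [comm x b * a + _]addrC.
by rewrite scalerDr opprD addrACA.
Qed.

Lemma comm_0r (A : pzRingType) (x : A) : comm x 0 = 0.
Proof. by rewrite /comm mulr0 mul0r subrr. Qed.

Lemma comm_N (A : pzRingType) (x a : A) : comm a x = - comm x a.
Proof. by rewrite /comm opprB. Qed.

Lemma qbr_0r (R : fieldType) (A : algType R) (q : R) (x : A) : qbr q x 0 = 0.
Proof. by rewrite /qbr mulr0 mul0r scaler0 subrr. Qed.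

Lemma lin2 (R : fieldType) (V : lmodType R) (a b d e : R) (u v : V) :
  a *: (b *: u - d *: v) + e *: (u - v) = (a * b + e) *: u - (a * d + e) *: v.
Proof.
by rewrite scalerBr !scalerA scalerBr addrACA !scalerDl opprD.
Qed.

Definition qc (R : fieldType) (A : algType R) (k x : A) (c : R) :=
  k * x = c *: (x * k).

Lemma qc_of_conj (R : fieldType) (A : unitAlgType R) (k x : A) c :
  k \is a GRing.unit -> k * x * k^-1 = c *: x -> qc k x c.
Proof. by move=> Hk H; rewrite /qc -[k * x](divrK Hk) H scalerAl. Qed.

Lemma qc_mulk (R : fieldType) (A : algType R) (k k' x : A) c c' :
  qc k x c -> qc k' x c' -> qc (k * k') x (c * c').
Proof.
rewrite /qc => H H'.
by rewrite -mulrA H' -scalerAr [k * (x * _)]mulrA H -scalerAl scalerA [c * c']mulrC mulrA.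
Qed.

Lemma qc_expr (R : fieldType) (A : algType R) (k x : A) c n :
  qc k x c -> qc (k ^+ n) x (c ^+ n).
Proof.
move=> H; elim: n => [|n IH]; first by rewrite /qc !expr0 mulr1 mul1r scale1r.
by rewrite !exprS; apply: qc_mulk.
Qed.

Lemma qc_inv (R : fieldType) (A : unitAlgType R) (k x : A) c :
  k \is a GRing.unit -> c != 0 -> qc k x c -> qc k^-1 x c^-1.
Proof.
rewrite /qc => Hk Hc H.
have H2 : x * k^-1 = c *: (k^-1 * x).
  have := congr1 (fun z => k^-1 * z * k^-1) H => /=.
  by rewrite mulKr // -scalerAr -scalerAl !mulrA mulrK.
by rewrite H2 scalerA mulVf // scale1r.
Qed.

Lemma qc_mul (R : fieldType) (A : algType R) (k x y : A) c d :
  qc k x c -> qc k y d -> qc k (x * y) (c * d).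
Proof.
rewrite /qc => H H'.
by rewrite mulrA H -scalerAl -[x * k * y]mulrA H' -scalerAr scalerA mulrA.
Qed.

Lemma qc_qbr (R : fieldType) (A : algType R) (q : R) (k x y : A) c d :
  qc k x c -> qc k y d -> qc k (qbr q x y) (c * d).
Proof.
move=> H H'; have H1 := qc_mul H H'; have H2 := qc_mul H' H.
move: H1 H2; rewrite /qc /qbr => H1 H2.
by rewrite mulrBr -scalerAr H1 H2 [d * c]mulrC mulrBl -scalerAl scalerBr !scalerA [q^-1 * _]mulrC.
Qed.

Lemma qc_Maux (R : fieldType) (A : algType R) (q : R) (E : nat -> A) (k0 : A) n k :
  (forall p, (k - n <= p <= k)%N -> qc k0 (E p) 1) -> qc k0 (Maux q E n k) 1.
Proof.
elim: n => [|n IH] H /=.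
  by apply: H; rewrite subn0 leqnn.
rewrite -[1](mulr1 1); apply: qc_qbr; first by apply: H; lia.
by apply: IH => p Hp; apply: H; lia.
Qed.

Lemma qc1_comm (R : fieldType) (A : algType R) (k x : A) :
  qc k x 1 <-> comm k x = 0.
Proof. rewrite /qc /comm scale1r; split => H; first by rewrite H subrr. by apply/eqP; rewrite -subr_eq0 H. Qed.

Lemma qbr_0l (R : fieldType) (A : algType R) (q : R) (x : A) : qbr q 0 x = 0.
Proof. by rewrite /qbr mulr0 mul0r scaler0 subrr. Qed.

Lemma comm_Maux (R : fieldType) (A : algType R) (q : R) (E : nat -> A) (x : A) n k :
  (forall p, (k - n <= p <= k)%N -> comm x (E p) = 0) -> comm x (Maux q E n k) = 0.
Proof.
move=> H; apply/qc1_comm; apply: qc_Maux => p Hp; apply/qc1_comm; exact: H.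
Qed.

Lemma qc_flip (R : fieldType) (A : algType R) (k x : A) c :
  c != 0 -> qc k x c -> x * k = c^-1 *: (k * x).
Proof. by move=> Hc ->; rewrite scalerA mulVf // scale1r. Qed.

Lemma calc2 (R : fieldType) (A : algType R) (q c b d : R) (u v : A) :
  -(c *: (b *: u - d *: v)) - q^-1 *: -(c *: (u - v)) =
  (-c * b + q^-1 * c) *: u - (-c * d + q^-1 * c) *: v.
Proof. by rewrite -lin2 scalerN opprK scalerA scaleNr. Qed.

Lemma Mq_step (R : fieldType) (A : lalgType R) (q : R) (E : nat -> A) j k :
  (j < k)%N -> Mq q E j k = qbr q (E j) (Mq q E j.+1 k).
Proof.
move=> H; rewrite /Mq ltnW // H.
have -> : (k - j = (k - j.+1).+1)%N by lia.
by rewrite /= ; congr (qbr q (E _) _); lia.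
Qed.

Lemma Mq_kk (R : fieldType) (A : lalgType R) (q : R) (E : nat -> A) k :
  Mq q E k k = E k.
Proof. by rewrite /Mq leqnn subnn. Qed.

Lemma Mq_gt (R : fieldType) (A : lalgType R) (q : R) (E : nat -> A) j k :
  (k < j)%N -> Mq q E j k = 0.
Proof. by move=> H; rewrite /Mq leqNgt H. Qed.

Lemma Mq_Maux (R : fieldType) (A : lalgType R) (q : R) (E : nat -> A) j k :
  (j <= k)%N -> Mq q E j k = Maux q E (k - j) k.
Proof. by move=> H; rewrite /Mq H. Qed.

Unset Implicit Arguments.

Theorem lemma3p1 (R : rcfType) (A : unitAlgType R) (q : R) (l : nat)
  (star : A -> A) (K E F : nat -> A) :
  0 < q -> q < 1 -> (1 <= l)%N ->
  (* star is an involutive anti-automorphism, linear over the real scalars *)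
  (forall a b, star (a + b) = star a + star b) ->
  (forall a b, star (a * b) = star b * star a) ->
  (forall (c : R) a, star (c *: a) = c *: star a) ->
  (forall a, star (star a) = a) ->
  star 1 = 1 ->
  (* generators *)
  (forall i, (1 <= i <= l)%N -> K i \is a GRing.unit) ->
  (forall i, (1 <= i <= l)%N -> star (K i) = K i) ->
  (forall i, (1 <= i <= l)%N -> F i = star (E i)) ->
  (* relations *)
  (forall i j, (1 <= i <= l)%N -> (1 <= j <= l)%N -> K i * K j = K j * K i) ->
  (forall i, (1 <= i <= l)%N -> K i * E i * (K i)^-1 = q *: E i) ->
  (forall i j, (1 <= i <= l)%N -> (1 <= j <= l)%N ->
     (i == j.+1) || (j == i.+1) ->
     K i * E j * (K i)^-1 = (Num.sqrt q)^-1 *: E j) ->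
  (forall i j, (1 <= i <= l)%N -> (1 <= j <= l)%N ->
     (i.+1 < j)%N || (j.+1 < i)%N -> K i * E j * (K i)^-1 = E j) ->
  (forall i, (1 <= i <= l)%N -> K i * F i * (K i)^-1 = q^-1 *: F i) ->
  (forall i j, (1 <= i <= l)%N -> (1 <= j <= l)%N ->
     (i == j.+1) || (j == i.+1) ->
     K i * F j * (K i)^-1 = Num.sqrt q *: F j) ->
  (forall i j, (1 <= i <= l)%N -> (1 <= j <= l)%N ->
     (i.+1 < j)%N || (j.+1 < i)%N -> K i * F j * (K i)^-1 = F j) ->
  (forall i, (1 <= i <= l)%N ->
     E i * F i - F i * E i = (q - q^-1)^-1 *: (K i ^+ 2 - K i ^- 2)) ->
  (forall i j, (1 <= i <= l)%N -> (1 <= j <= l)%N -> i != j ->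
     E i * F j - F j * E i = 0) ->
  (forall i j, (1 <= i <= l)%N -> (1 <= j <= l)%N ->
     (i == j.+1) || (j == i.+1) ->
     E i ^+ 2 * E j - (q + q^-1) *: (E i * E j * E i) + E j * E i ^+ 2 = 0) ->
  (forall i j, (1 <= i <= l)%N -> (1 <= j <= l)%N ->
     (i == j.+1) || (j == i.+1) ->
     F i ^+ 2 * F j - (q + q^-1) *: (F i * F j * F i) + F j * F i ^+ 2 = 0) ->
  (forall i j, (1 <= i <= l)%N -> (1 <= j <= l)%N ->
     (i.+1 < j)%N || (j.+1 < i)%N -> E i * E j = E j * E i) ->
  (forall i j, (1 <= i <= l)%N -> (1 <= j <= l)%N ->
     (i.+1 < j)%N || (j.+1 < i)%N -> F i * F j = F j * F i) ->
  forall i j k, (1 <= i <= l)%N -> (1 <= j <= l)%N -> (1 <= k <= l)%N ->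
    comm (F i) (Mq q E j k) =
      (i == j)%:R *: (Mq q E j.+1 k * K i ^- 2)
      - (i == k)%:R *: (K i ^+ 2 * Mq q E j k.-1)
      - ((i == j) && (i == k))%:R *: ((q - q^-1)^-1 *: (K i ^+ 2 - K i ^- 2))
    /\
    comm (E i) (star (Mq q E j k)) =
      (i == k)%:R *: (star (Mq q E j k.-1) * K i ^+ 2)
      - (i == j)%:R *: (K i ^- 2 * star (Mq q E j.+1 k))
      + ((i == j) && (i == k))%:R *: ((q - q^-1)^-1 *: (K i ^+ 2 - K i ^- 2)).
Proof.
move=> hq0 hq1 hl sD sM sZ sK s1 Ku Ks FE KKc KE KEadj KEfar KF KFadj KFfar
  EF EFne SerreE SerreF EEfar FFfar.
set c := (q - q^-1)^-1.
have q0 : q != 0 by rewrite gt_eqF.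
have qq : q - q^-1 != 0.
  apply/eqP => /eqP; rewrite subr_eq0 => /eqP h.
  have : q * q = 1 by rewrite {2}h mulfV.
  nra.
have s2 : (Num.sqrt q)^-1 ^+ 2 = q^-1 by rewrite exprVn sqr_sqrtr // ltW.
have s0 : (Num.sqrt q)^-1 != 0 by rewrite invr_eq0 sqrtr_eq0 -ltNge.
have KXu : forall i, (1 <= i <= l)%N -> K i ^+ 2 \is a GRing.unit.
  by move=> i hi; rewrite unitrX // Ku.
have qXadj : forall i j, (1 <= i <= l)%N -> (1 <= j <= l)%N ->
    (i == j.+1) || (j == i.+1) -> qc (K i ^+ 2) (E j) q^-1.
  move=> i j hi hj hij; rewrite -s2; apply: qc_expr; apply: qc_of_conj;
    [exact: Ku | exact: KEadj].
have qYadj : forall i j, (1 <= i <= l)%N -> (1 <= j <= l)%N ->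
    (i == j.+1) || (j == i.+1) -> qc (K i ^- 2) (E j) q.
  move=> i j hi hj hij; rewrite -[q]invrK; apply: qc_inv;
    [exact: KXu | by rewrite invr_eq0 | exact: qXadj].
have qXfar : forall i j, (1 <= i <= l)%N -> (1 <= j <= l)%N ->
    (i.+1 < j)%N || (j.+1 < i)%N -> qc (K i ^+ 2) (E j) 1.
  move=> i j hi hj hij; rewrite -(expr1n R 2); apply: qc_expr; apply: qc_of_conj;
    [exact: Ku | by rewrite scale1r; exact: KEfar].
have qYfar : forall i j, (1 <= i <= l)%N -> (1 <= j <= l)%N ->
    (i.+1 < j)%N || (j.+1 < i)%N -> qc (K i ^- 2) (E j) 1.
  move=> i j hi hj hij; rewrite -invr1; apply: qc_inv;
    [exact: KXu | exact: oner_neq0 | exact: qXfar].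
have CFE : forall i j, (1 <= i <= l)%N -> (1 <= j <= l)%N -> i != j ->
    comm (F i) (E j) = 0.
  by move=> i j hi hj hij; rewrite comm_N /comm EFne // ?oppr0 // eq_sym.
have CFEi : forall i, (1 <= i <= l)%N ->
    comm (F i) (E i) = - (c *: (K i ^+ 2 - K i ^- 2)).
  by move=> i hi; rewrite comm_N /comm EF.
have C_out : forall i j k, (1 <= i <= l)%N -> (1 <= j <= l)%N -> (1 <= k <= l)%N ->
    (j <= k)%N -> (i < j)%N || (k < i)%N -> comm (F i) (Mq q E j k) = 0.
  move=> i j k hi hj hk hjk hij; rewrite Mq_Maux //; apply: comm_Maux => p hp.
  by apply: CFE => //; lia.
have qKM : forall j k, (1 <= j <= l)%N -> (1 <= k <= l)%N -> (j < k)%N ->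
    qc (K j) (Mq q E j.+1 k) (Num.sqrt q)^-1.
  move=> j k hj hk hjk; case: (ltngtP j.+1 k) => h; last first.
  - rewrite -h Mq_kk; apply: qc_of_conj; first exact: Ku.
    by apply: KEadj => //; [lia | rewrite eqxx orbT].
  - lia.
  rewrite Mq_step // -[(Num.sqrt q)^-1]mulr1; apply: qc_qbr.
    apply: qc_of_conj; first exact: Ku.
    by apply: KEadj => //; [lia | rewrite eqxx orbT].
  rewrite Mq_Maux //; apply: qc_Maux => p hp; apply: qc_of_conj; first exact: Ku.
  by rewrite scale1r; apply: KEfar; lia.
have C_left : forall j k, (1 <= j <= l)%N -> (1 <= k <= l)%N -> (j < k)%N ->
    comm (F j) (Mq q E j k) = Mq q E j.+1 k * K j ^- 2.
  move=> j k hj hk hjk.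
  rewrite Mq_step // comm_qbr (C_out j j.+1 k) //; try lia.
  rewrite qbr_0r addr0 CFEi //.
  have hX : qc (K j ^+ 2) (Mq q E j.+1 k) q^-1.
    by rewrite -s2; apply: qc_expr; apply: qKM.
  have hY : qc (K j ^- 2) (Mq q E j.+1 k) q.
    by have := qc_inv (KXu j hj) _ hX; rewrite invrK invr_eq0; apply.
  rewrite /qc in hX hY.
  rewrite /qbr mulNr -scalerAl mulrBl hX hY mulrN -scalerAr mulrBr calc2.
  have e1 : -c * q^-1 + q^-1 * c = 0 by rewrite mulNr [c * _]mulrC addNr.
  have e2 : -c * q + q^-1 * c = -1.
    have -> : -c * q + q^-1 * c = -(c * (q - q^-1)) by ring.
    by rewrite /c mulVf.
  by rewrite e1 e2 scale0r sub0r scaleN1r opprK.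
have C_right : forall n k, (1 <= k <= l)%N -> (n.+2 <= k)%N ->
    comm (F k) (Maux q E n.+1 k) = -(K k ^+ 2 * Maux q E n k.-1).
  elim=> [|n IH] k hk hnk.
    rewrite /= subn1 comm_qbr CFE //; try lia.
    rewrite qbr_0l add0r CFEi //.
    have hX : qc (K k ^+ 2) (E k.-1) q^-1.
      by apply: qXadj => //; [lia | apply/orP; left; apply/eqP; lia].
    have hY : qc (K k ^- 2) (E k.-1) q.
      by apply: qYadj => //; [lia | apply/orP; left; apply/eqP; lia].
    have fX := qc_flip (invr_neq0 q0) hX; have fY := qc_flip q0 hY.
    rewrite invrK in fX.
    rewrite /qbr mulrN -scalerAr mulrBr fX fY mulNr -scalerAl mulrBl calc2.
    have e1 : -c * q^-1 + q^-1 * c = 0 by rewrite mulNr [c * _]mulrC addNr.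
    have e2 : -c * q + q^-1 * c = -1.
      have -> : -c * q + q^-1 * c = -(c * (q - q^-1)) by ring.
      by rewrite /c mulVf.
    by rewrite e1 e2 scale0r subr0 scaleN1r.
  rewrite [Maux q E n.+2 k]/= comm_qbr CFE //; try lia.
  rewrite qbr_0l add0r IH //; try lia.
  rewrite [Maux q E n.+1 k.-1]/=.
  have -> : (k.-1 - n.+1 = k - n.+2)%N by lia.
  have hX : qc (K k ^+ 2) (E (k - n.+2)%N) 1 by apply: qXfar => //; lia.
  have fX := qc_flip (oner_neq0 R) hX; rewrite invr1 scale1r in fX.
  by rewrite /qbr mulrN mulrA fX mulNr scalerN opprK mulrBr -scalerAr !mulrA opprB addrC.
have C_mid : forall i k, (1 <= i <= l)%N -> (1 <= k <= l)%N -> (i < k)%N ->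
    forall n, (n < k)%N -> (k - n < i)%N -> comm (F i) (Maux q E n k) = 0.
  move=> i k hi hk hik; elim=> [|n IH] hn hkn; first lia.
  rewrite [Maux q E n.+1 k]/= comm_qbr CFE //; try lia.
  rewrite qbr_0l add0r.
  case: (ltngtP (k - n) i) => h; first by rewrite IH ?qbr_0r //; lia.
    lia.
  have -> : Maux q E n k = Mq q E i k by rewrite Mq_Maux; [congr Maux; lia | lia].
  rewrite C_left //.
  have -> : (k - n.+1 = i.-1)%N by lia.
  have hY : qc (K i ^- 2) (E i.-1) q.
    by apply: qYadj => //; [lia | apply/orP; left; apply/eqP; lia].
  have hC : comm (E i.-1) (Mq q E i.+1 k) = 0.
    case: (leqP i.+1 k) => h2; last by rewrite Mq_gt // comm_0r.
    rewrite Mq_Maux //; apply: comm_Maux => p hp.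
    by rewrite /comm EEfar ?subrr //; lia.
  move: hC; rewrite /comm => /eqP; rewrite subr_eq0 => /eqP hC.
  rewrite /qc in hY.
  by rewrite /qbr mulrA hC -[_ * _ * E _]mulrA hY -scalerAr scalerA mulVf // scale1r mulrA subrr.
move=> i j k hi hj hk.
have EQ1 : comm (F i) (Mq q E j k) =
      (i == j)%:R *: (Mq q E j.+1 k * K i ^- 2)
      - (i == k)%:R *: (K i ^+ 2 * Mq q E j k.-1)
      - ((i == j) && (i == k))%:R *: ((q - q^-1)^-1 *: (K i ^+ 2 - K i ^- 2)).
  case: (ltngtP j k) => hjk.
  - case: (ltngtP i j) => hij.
    + have /negbTE Etmp : i != j by lia.
 rewrite ?Etmp; clear Etmp.
      have /negbTE Etmp : i != k by lia.
 rewrite ?Etmp; clear Etmp.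
      by rewrite C_out ?scale0r ?subr0 //; lia.
    + have /negbTE Etmp : i != j by lia.
 rewrite ?Etmp; clear Etmp.
      case: (ltngtP i k) => hik.
      * have /negbTE Etmp : i != k by lia.
 rewrite ?Etmp; clear Etmp.
        rewrite Mq_Maux; last lia.
        by rewrite C_mid ?scale0r ?subr0 //; lia.
      * have /negbTE Etmp : i != k by lia.
 rewrite ?Etmp; clear Etmp.
        by rewrite C_out ?scale0r ?subr0 //; lia.
      * subst i; rewrite ?eqxx /= !scale0r sub0r subr0 scale1r.
        rewrite Mq_Maux; last lia.
        have -> : (k - j = (k - j.+1).+1)%N by lia.
        rewrite C_right //; last lia.
        rewrite Mq_Maux; last lia.
        by congr (- (_ * Maux q E _ _)); lia.
    + subst i; rewrite ?eqxx /=.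
      have /negbTE Etmp : j != k by lia.
 rewrite ?Etmp; clear Etmp.
      by rewrite C_left // scale1r scale0r subr0 scale0r subr0.
  - rewrite [Mq q E j k]Mq_gt // comm_0r [Mq q E j.+1 k]Mq_gt 1?[Mq q E j k.-1]Mq_gt; try lia.
    have -> : ((i == j) && (i == k)) = false.
      by apply/negP => /andP [/eqP h1 /eqP h2]; lia.
    by rewrite mul0r mulr0 !scaler0 scale0r !subrr.
  - subst j; rewrite [Mq q E k.+1 k]Mq_gt 1?[Mq q E k k.-1]Mq_gt; try lia.
    rewrite mul0r mulr0 !scaler0 oppr0 addr0 sub0r.
    case: (eqVneq i k) => hik.
      by subst i; rewrite Mq_kk CFEi // ?eqxx /= scale1r.
    by rewrite C_out ?scale0r ?oppr0 //=; lia.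
split; first exact: EQ1.
have star0 : star 0 = 0 by have := sZ 0 0; rewrite !scale0r.
have starN : forall a, star (- a) = - star a by move=> a; rewrite -scaleN1r sZ scaleN1r.
have starB : forall a b, star (a - b) = star a - star b by move=> a b; rewrite sD starN.
have sKinv : star (K i)^-1 = (K i)^-1.
  have h : star (K i)^-1 * K i = 1 by rewrite -{2}(Ks i hi) -sM divrr ?Ku.
  by rewrite -[star _](mulrK (Ku i hi)) h mul1r.
have sX : star (K i ^+ 2) = K i ^+ 2 by rewrite expr2 sM Ks.
have sY : star (K i ^- 2) = K i ^- 2 by rewrite -exprVn expr2 sM sKinv.
have -> : comm (E i) (star (Mq q E j k)) = - star (comm (F i) (Mq q E j k)).
  by rewrite /comm starB !sM (FE i hi) sK opprB.
rewrite EQ1 !starB !sZ (sM (Mq q E j.+1 k)) (sM (K i ^+ 2)) sX sY starB ?sX ?sY /c.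
by rewrite opprD opprK opprB.
Qed.
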